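(* Let $\pi=x_1^2x_2^2x_3^2$ (with distinct variables $x_1,x_2,x_3$). For every $m\ge4$, $\mathrm{TD}(\pi,\Pi^2_{\infty,m,cf})=\infty$.
   Context: Fix a countably infinite set $X$ of variables and an alphabet $\Sigma$ with $|\Sigma|=2$, disjoint from $X$. A pattern is a nonempty finite string over $X\cup\Sigma$; it is constant-free if it contains no letter. A substitution is a morphism $(X\cup\Sigma)^*\to\Sigma^*$ fixing letters; $L(\pi)$ (erasing pattern language) is the set of all images of $\pi$. $\Pi^2_{\infty,m,cf}$ is the class of constant-free patterns over a binary alphabet in which every variable occurs at most $m$ times. A labelled example is $(w,\pm)$ with $w\in\Sigma^*$; a teaching set for $\pi$ w.r.t. a class $\Pi$ is a set $T$ of labelled examples consistent with $\pi$ ($w\in L(\pi)$ iff label $+$) such that every $\tau\in\Pi$ consistent with $T$ has $L(\tau)=L(\pi)$; $\mathrm{TD}(\pi,\Pi)$ is the minimum size of such a set, $\infty$ if no finite teaching set exists. *)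

(* Defs.v *)
From mathcomp Require Import all_boot.
Set Implicit Arguments. Unset Strict Implicit. Unset Printing Implicit Defensive.

(* Alphabet Sigma = bool (|Sigma| = 2); words are seq bool.
   Variables X = nat (countably infinite, disjoint from Sigma).
   A symbol of a general pattern is either a variable or a letter. *)
Definition symbol := (nat + bool)%type.
Definition pattern := seq symbol.

Definition constant_free (p : pattern) : bool :=
  all (fun a => if a is inl _ then true else false) p.

Definition subst_apply (s : nat -> seq bool) (p : pattern) : seq bool :=
  flatten (map (fun a => match a with inl x => s x | inr c => [:: c] end) p).

Definition lang (p : pattern) (w : seq bool) : Prop :=
  exists s : nat -> seq bool, w = subst_apply s p.

(* labelled example (w, b): b = true means label +, b = false means label - *)
Definition example := (seq bool * bool)%type.

Definition consistent (p : pattern) (T : seq example) : Prop :=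
  forall e, e \in T -> (lang p e.1 <-> e.2 = true).

Definition in_class (m : nat) (t : pattern) : Prop :=
  [/\ t != [::], constant_free t & forall x : nat, count_mem (inl x) t <= m].

Definition teaching_set (m : nat) (p : pattern) (T : seq example) : Prop :=
  consistent p T /\
  forall t, in_class m t -> consistent t T -> forall w, lang t w <-> lang p w.

Definition TD_infinite (m : nat) (p : pattern) : Prop :=
  ~ exists T : seq example, teaching_set m p T.

Definition pi_sq : pattern := [:: inl 0; inl 0; inl 1; inl 1; inl 2; inl 2].

(* Main.v *)
Require Import Defs.
From mathcomp Require Import all_boot zify.
Set Implicit Arguments. Unset Strict Implicit. Unset Printing Implicit Defensive.

(* Proof strategy: for any finite T consistent with pi, build a
   pattern tau = A^2 B^2 C^2 (each variable at most 4 times, every variable of C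
   occurring twice in ABC) whose language contains all positive examples of T and is
   a subset of L(pi); a long witness word W shows L(tau) <> L(pi). *)



Definition blk (g : nat) : seq bool := true :: nseq g false.
Definition run (g : nat) : seq bool := true :: nseq g false ++ [:: true].
Definition offs (G : seq nat) (k : nat) : nat := sumn (map S (take k G)).

Lemma nseqfT a b X Y : nseq a false ++ true :: X = nseq b false ++ true :: Y -> a = b /\ X = Y.
Proof.
elim: a b => [|a IH] [|b] //=.
- by case=> ->.
- by case=> /IH [-> ->].
Qed.

Lemma nseq_prefix a Y L Z : nseq a false ++ Y = L ++ true :: Z ->
  exists L', L = nseq a false ++ L' /\ Y = L' ++ true :: Z.
Proof.
elim: a L => [|a IH] L /=.
- by move=> ->; exists L.
- case: L => [|y L] //= [<-] /IH [L' [-> ->]]. by exists L'.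
Qed.

Lemma cnt_nseqF g : count_mem true (nseq g false) = 0.
Proof. by elim: g. Qed.

Lemma runpos G tl L g R : count_mem true tl = 0 ->
  flatten (map blk G) ++ true :: tl = L ++ run g ++ R ->
  exists k, [/\ k < size G, nth 0 G k = g & size L = offs G k].
Proof.
move=> Htl; elim: G L => [|g0 G IH] L /=.
- move/(congr1 (count_mem true)); rewrite /run /= !count_cat /= Htl !count_cat cnt_nseqF /=; lia.
- rewrite /blk /= -catA; case: L => [|x L] /=.
  + case=> E.
    have [r Hr] : exists r, flatten (map blk G) ++ true :: tl = true :: r.
      by case: G {IH E} => [|g1 G] /=; eexists.
    move: E; rewrite Hr /run /= -catA /= => /nseqfT [-> _].
    by exists 0; rewrite /offs /=.
  + case=> _ E.
    have := nseq_prefix E; case=> L' [EL E2].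
    have [k [Hk Hn Ho]] : exists k, [/\ k < size G, nth 0 G k = g & size L' = offs G k].
      apply: IH. by rewrite E2 /run /= -catA.
    exists k.+1; split => //.
    by rewrite EL /offs /= size_cat size_nseq Ho /offs.
Qed.

Definition occ (W : seq bool) (p : nat) (F : seq bool) : Prop :=
  p + size F <= size W /\ forall i, i < size F -> nth false W (p + i) = nth false F i.

Lemma occ_split W F p : occ W p F -> W = take p W ++ F ++ drop (p + size F) W.
Proof.
case=> Hs Hn.
have E : take (size F) (drop p W) = F.
  apply: (@eq_from_nth _ false).
  - rewrite size_take_min size_drop; lia.
  - move=> i; rewrite size_take_min size_drop => Hi.
    have Hi2 : i < size F by lia.
    by rewrite nth_take // nth_drop Hn.
by rewrite -{1}(cat_take_drop p W) -{1}(cat_take_drop (size F) (drop p W)) E drop_drop addnC.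
Qed.

Lemma occ_cat L F R : occ (L ++ F ++ R) (size L) F.
Proof.
split; first by rewrite !size_cat; lia.
by move=> i Hi; rewrite nth_cat ltnNge leq_addr /= addKn nth_cat Hi.
Qed.

Lemma occ_sub W p Q q1 F q2 : occ W p Q -> Q = q1 ++ F ++ q2 -> occ W (p + size q1) F.
Proof.
move=> [Hs Hn] EQ; split.
- move: Hs; rewrite EQ !size_cat; lia.
- move=> i Hi. rewrite -addnA Hn; last by rewrite EQ !size_cat; lia.
  by rewrite EQ nth_cat ltnNge leq_addr /= addKn nth_cat Hi.
Qed.

Lemma occ_shift L Q R p F : occ (L ++ Q ++ Q ++ R) p F -> size L <= p ->
  p + size F <= size L + size Q -> occ (L ++ Q ++ Q ++ R) (p + size Q) F.
Proof.
move=> [Hs Hn] H1 H2; split.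
- rewrite !size_cat; lia.
- move=> i Hi. rewrite -Hn //.
  rewrite !nth_cat; repeat (case: ifP => ?); try (exfalso; lia).
  congr nth; lia.
Qed.

Lemma take_index_nseq (s : seq bool) : take (index true s) s = nseq (index true s) false.
Proof.
elim: s => [|x s IH] //=. by case: x => //=; rewrite IH.
Qed.

Lemma twoA Q : 2 <= count_mem true Q -> exists q1 g q2, Q = q1 ++ run g ++ q2.
Proof.
move=> H.
have inQ : true \in Q by rewrite -has_pred1 has_count; lia.
set i := index true Q.
have EQ : Q = take i Q ++ true :: drop i.+1 Q.
  by rewrite -{1}(cat_take_drop i Q) (drop_nth false) ?index_mem // nth_index.
set Q' := drop i.+1 Q.
have cQ : 1 <= count_mem true Q'.
  move: H; rewrite {1}EQ count_cat /= take_index_nseq cnt_nseqF /= /Q' add0n add1n ltnS; exact.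
have inQ' : true \in Q' by rewrite -has_pred1 has_count; lia.
set j := index true Q'.
have EQ' : Q' = take j Q' ++ true :: drop j.+1 Q'.
  by rewrite -{1}(cat_take_drop j Q') (drop_nth false) ?index_mem // nth_index.
exists (take i Q), j, (drop j.+1 Q').
rewrite {1}EQ; congr (_ ++ _); rewrite /run /=; congr (_ :: _).
rewrite -/Q' {1}EQ' /j take_index_nseq -catA. done.
Qed.



Definition X0 : seq bool := true :: nseq 4 false.
Definition Y0 : seq bool := nseq 5 false ++ [:: true].
Definition nsq (t : nat) := iota 10 t.
Definition zz (t : nat) : seq bool := nseq 6 false ++ flatten (map blk (nsq t)) ++ [:: true; false].
Definition W (t : nat) : seq bool := X0 ++ X0 ++ Y0 ++ Y0 ++ zz t ++ zz t.
Definition GG (t : nat) : seq nat := [:: 4; 9; 5; 6] ++ nsq t ++ 7 :: nsq t.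

Lemma W_G t : W t = flatten (map blk (GG t)) ++ true :: [:: false].
Proof.
rewrite /W /GG /zz map_cat flatten_cat /= map_cat flatten_cat /=.
by rewrite -!catA.
Qed.

Lemma size_flat_blk G : size (flatten (map blk G)) = sumn (map S G).
Proof. by elim: G => //= g G IH; rewrite size_cat IH /= size_nseq. Qed.

Lemma size_zz t : size (zz t) = sumn (map S (nsq t)) + 8.
Proof. rewrite /zz !size_cat size_flat_blk size_nseq /=; lia. Qed.

Lemma size_GG t : size (GG t) = 5 + t.*2.
Proof. rewrite /GG !size_cat /= /nsq size_iota; lia. Qed.

Lemma offs_mono G k k' : k <= k' -> offs G k <= offs G k'.
Proof.
move=> H; rewrite /offs -(cat_take_drop k (take k' G)) -take_min (minn_idPl H).
by rewrite map_cat sumn_cat leq_addr.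
Qed.

Lemma sumn_cat' (a b : seq nat) : sumn (a ++ b) = sumn a + sumn b.
Proof. exact: sumn_cat. Qed.

Lemma nthGG1 t i : i < t -> nth 0 (GG t) (4 + i) = 10 + i.
Proof.
move=> H; rewrite /GG nth_cat.
have -> : (4 + i < size [:: 4; 9; 5; 6]) = false by rewrite /=; lia.
rewrite (_ : 4 + i - size [:: 4; 9; 5; 6] = i); last by rewrite /=; lia.
by rewrite nth_cat /nsq size_iota H nth_iota.
Qed.

Lemma nthGG0 t : nth 0 (GG t) (4 + t) = 7.
Proof.
rewrite /GG nth_cat.
have -> : (4 + t < size [:: 4; 9; 5; 6]) = false by rewrite /=; lia.
rewrite (_ : 4 + t - size [:: 4; 9; 5; 6] = t); last by rewrite /=; lia.
rewrite nth_cat /nsq size_iota.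
by rewrite ltnn subnn.
Qed.

Lemma nthGG2 t i : i < t -> nth 0 (GG t) (5 + t + i) = 10 + i.
Proof.
move=> H; rewrite /GG nth_cat.
have -> : (5 + t + i < size [:: 4; 9; 5; 6]) = false by rewrite /=; lia.
rewrite (_ : 5 + t + i - size [:: 4; 9; 5; 6] = t + i.+1); last by rewrite /=; lia.
rewrite nth_cat /nsq size_iota.
have -> : (t + i.+1 < t) = false by lia.
by rewrite (_ : t + i.+1 - t = i.+1) /= ?nth_iota //; lia.
Qed.

Lemma offsGG1 t i : i <= t -> offs (GG t) (4 + i) = 28 + offs (nsq t) i.
Proof.
move=> H; rewrite /offs /GG take_cat.
have -> : (4 + i < size [:: 4; 9; 5; 6]) = false by rewrite /=; lia.
rewrite (_ : 4 + i - size [:: 4; 9; 5; 6] = i); last by rewrite /=; lia.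
rewrite take_cat /nsq size_iota ltn_neqAle H andbT.
case: eqP => [->|_] /=; last lia.
rewrite subnn take0 cats0 take_oversize ?size_iota //; lia.
Qed.

Lemma offsGG2 t i : i <= t -> offs (GG t) (5 + t + i) = 36 + sumn (map S (nsq t)) + offs (nsq t) i.
Proof.
move=> H; rewrite /offs /GG take_cat.
have -> : (5 + t + i < size [:: 4; 9; 5; 6]) = false by rewrite /=; lia.
rewrite (_ : 5 + t + i - size [:: 4; 9; 5; 6] = t + i.+1); last by rewrite /=; lia.
rewrite take_cat /nsq size_iota.
have -> : (t + i.+1 < t) = false by lia.
rewrite (_ : t + i.+1 - t = i.+1); last by lia.
rewrite /= !map_cat !sumn_cat /=. lia.
Qed.

Lemma kcases t k : k < 5 + t.*2 ->
  [\/ k < 4, exists2 i, i < t & k = 4 + i, k = 4 + t | exists2 i, i < t & k = 5 + t + i].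
Proof.
move=> H.
case: (ltnP k 4) => H1; first by constructor 1.
case: (ltnP k (4 + t)) => H2; first by constructor 2; exists (k - 4); lia.
case: (ltnP k (5 + t)) => H3; first by constructor 3; lia.
by constructor 4; exists (k - 5 - t); lia.
Qed.

Lemma nthGG_small t k : k < 4 -> nth 0 (GG t) k = nth 0 [:: 4; 9; 5; 6] k.
Proof. by move=> H; rewrite /GG nth_cat /= H. Qed.

Lemma runW t p g : occ (W t) p (run g) ->
  exists k, [/\ k < size (GG t), nth 0 (GG t) k = g & p = offs (GG t) k].
Proof.
move=> H; have [Hs _] := H.
have E := occ_split H; rewrite {1}W_G in E.
have [k [Hk Hn Ho]] := runpos (erefl : count_mem true [:: false] = 0) E.
exists k; split => //; rewrite -Ho size_take_min; move: Hs; rewrite /run /=; lia.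
Qed.

Lemma keyrun t p p' g : occ (W t) p (run g) -> occ (W t) p' (run g) -> p < p' ->
  p' = p + size (zz t) /\ 28 <= p.
Proof.
move=> /runW [k [Hk Hn Ho]] /runW [k' [Hk' Hn' Ho']] Hpp.
have Hkk : k < k'.
  rewrite ltnNge; apply/negP => H; move: (offs_mono (GG t) H); lia.
rewrite size_GG in Hk Hk'.
rewrite size_zz.
have Hv : nth 0 (GG t) k = nth 0 (GG t) k' by rewrite Hn Hn'.
case: (kcases Hk) => [H1|[i Hi Ek]|Ek|[i Hi Ek]];
  case: (kcases Hk') => [H1'|[i' Hi' Ek']|Ek'|[i' Hi' Ek']].
all: try (exfalso; lia).
- move: Hv; rewrite !nthGG_small //.
  by case: k k' Hkk H1 H1' {Hk Hk' Hn Hn' Ho Ho'} => [|[|[|[|k]]]] [|[|[|[|k']]]].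
- move: Hv; rewrite nthGG_small // Ek' nthGG1 //.
  by case: k Hkk H1 {Hk Hn Ho} => [|[|[|[|k]]]] /=; lia.
- move: Hv; rewrite nthGG_small // Ek' nthGG0.
  by case: k Hkk H1 {Hk Hn Ho} => [|[|[|[|k]]]] /=; lia.
- move: Hv; rewrite nthGG_small // Ek' nthGG2 //.
  by case: k Hkk H1 {Hk Hn Ho} => [|[|[|[|k]]]] /=; lia.
- move: Hv; rewrite Ek nthGG1 // Ek' nthGG1 //; lia.
- move: Hv; rewrite Ek nthGG1 // Ek' nthGG0; lia.
- move: Hv; rewrite Ek nthGG1 // Ek' nthGG2 // => Hv.
  have ii : i' = i by lia.
  subst i'. rewrite Ho Ho' Ek Ek' offsGG1 ?offsGG2; lia.
- move: Hv; rewrite Ek nthGG0 Ek' nthGG2 //; lia.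
- move: Hv; rewrite Ek nthGG2 // Ek' nthGG2 //; lia.
Qed.



Lemma occ_in L Z R o F : occ Z o F -> occ (L ++ Z ++ R) (size L + o) F.
Proof.
case=> Hs Hn; split; first by rewrite !size_cat; lia.
move=> i Hi; rewrite -addnA nth_cat ltnNge leq_addr /= addKn nth_cat.
by rewrite (_ : o + i < size Z = true) ?Hn //; lia.
Qed.

Lemma cnt_flat_blk G : count_mem true (flatten (map blk G)) = size G.
Proof. elim: G => //= g G IH; rewrite count_cat /= cnt_nseqF IH; lia. Qed.

Lemma sumn_iota_ge m t : (m.+1) * t <= sumn (map S (iota m t)).
Proof. elim: t m => [|t IH] m /=; first by lia. have := IH m.+1. lia. Qed.

Lemma size_zz_ge t : 3 <= t -> 41 <= size (zz t).
Proof. move=> H; rewrite size_zz; have := sumn_iota_ge 10 t; rewrite /nsq; lia. Qed.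

Lemma cnt_zz t : count_mem true (zz t) = t + 1.
Proof. rewrite /zz !count_cat cnt_nseqF cnt_flat_blk /nsq size_iota /=; lia. Qed.

Lemma sqrun t L Q R : W t = L ++ Q ++ Q ++ R -> 2 <= count_mem true Q ->
  size Q = size (zz t).
Proof.
move=> E H; have [q1 [g [q2 EQ]]] := twoA H.
have o1 : occ (W t) (size L + size q1) (run g).
  rewrite E; apply: (occ_sub (Q := Q) (q2 := q2)) => //.
  exact: occ_cat.
have o2 : occ (W t) (size L + size q1 + size Q) (run g).
  rewrite E; apply: occ_shift; first by rewrite -E.
  - lia.
  - rewrite EQ /run /= !size_cat /= !size_cat size_nseq /=; lia.
have Hp : size L + size q1 < size L + size q1 + size Q.
  rewrite EQ !size_cat /run /=; lia.
have [H1 _] := keyrun o1 o2 Hp; lia.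
Qed.

Definition pfx : seq bool := X0 ++ X0 ++ Y0 ++ Y0.

Lemma size_pfx : size pfx = 22. Proof. by []. Qed.
Lemma cnt_pfx : count_mem true pfx = 4. Proof. by []. Qed.

Lemma W_pfx t : W t = pfx ++ zz t ++ zz t.
Proof. by rewrite /W /pfx -!catA. Qed.

Lemma W_run4 t : W t = [::] ++ run 4 ++ (nseq 4 false ++ Y0 ++ Y0 ++ zz t ++ zz t).
Proof. by rewrite /W /X0 /run. Qed.

Lemma W_run6 t : 1 <= t -> exists R,
  W t = (X0 ++ X0 ++ Y0 ++ nseq 5 false) ++ run 6 ++ R.
Proof.
case: t => [|t] // _.
exists (nseq 10 false ++ flatten (map blk (iota 11 t)) ++ [:: true; false] ++ zz t.+1).
by rewrite /W /zz /nsq /Y0 /run /= -!catA.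
Qed.

Lemma eqcat (s1 s2 s3 s4 : seq bool) : size s1 = size s2 -> s1 ++ s3 = s2 ++ s4 -> s1 = s2 /\ s3 = s4.
Proof. by move=> Hs /eqP; rewrite eqseq_cat // => /andP [/eqP -> /eqP ->]. Qed.

Lemma pin t X Y Z : 3 <= t -> X ++ X ++ Y ++ Y ++ Z ++ Z = W t ->
  count_mem true X + count_mem true Y = 2 /\ Z = zz t.
Proof.
move=> Ht E.
have Hsz := size_zz_ge Ht.
have Sz : size X + size Y + size Z = 11 + size (zz t).
  move: (congr1 size E); rewrite W_pfx (size_cat pfx) size_pfx !size_cat; lia.
have Ct : count_mem true X + count_mem true Y + count_mem true Z = t + 3.
  move: (congr1 (count_mem true) E); rewrite W_pfx (count_cat _ pfx) cnt_pfx (count_cat _ (zz t)) cnt_zz !count_cat; lia.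
case: (leqP 2 (count_mem true X)) => cX.
  have SX : size X = size (zz t) by apply: (@sqrun t [::] X (Y ++ Y ++ Z ++ Z)) => //; by rewrite -E.
  have o1 : occ (W t) 0 (run 4) by rewrite W_run4; exact: (occ_cat [::]).
  have o2 : occ (W t) (0 + size X) (run 4).
    move: o1; rewrite -E => o1; apply: (@occ_shift [::]) => //=; lia.
  have [_ H] := keyrun o1 o2 (ltac:(lia) : 0 < 0 + size X); lia.
case: (leqP 2 (count_mem true Y)) => cY.
  have EY : W t = (X ++ X) ++ Y ++ Y ++ (Z ++ Z) by rewrite -E -!catA.
  have SY : size Y = size (zz t) by apply: (sqrun EY).
  case: (leqP (size X) 10) => HX.
    have [R ER] := W_run6 (ltac:(lia) : 1 <= t).
    have o1 : occ (W t) 21 (run 6).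
      by rewrite ER; exact: (occ_cat (X0 ++ X0 ++ Y0 ++ nseq 5 false)).
    have o2 : occ (W t) (21 + size Y) (run 6).
      move: o1; rewrite EY => o1; apply: occ_shift => //; rewrite ?size_cat /run /= ?size_cat ?size_nseq /=; lia.
    have [_ H] := keyrun o1 o2 (ltac:(lia) : 21 < 21 + size Y); lia.
  have SX : size X = 11 by lia.
  have n0 : nth false (W t) 0 = nth false X 0.
    by rewrite -E nth_cat (_ : 0 < size X = true) //; lia.
  have n11 : nth false (W t) 11 = nth false X 0.
    by rewrite -E nth_cat SX ltnn subnn nth_cat (_ : 0 < size X = true) //; lia.
  by move: n0 n11; rewrite /W /X0 /= => <-.
case: (leqP 2 (count_mem true Z)) => cZ; last by lia.
have EZ : W t = (X ++ X ++ Y ++ Y) ++ Z ++ Z ++ [::] by rewrite cats0 -E -!catA.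
have SZ : size Z = size (zz t) by apply: (sqrun EZ).
move: EZ; rewrite cats0 W_pfx => /esym /eqcat [].
  rewrite size_pfx !size_cat; lia.
move=> E1 /eqcat [] // EZ _; split => //.
move: (congr1 (count_mem true) E1); rewrite cnt_pfx !count_cat; lia.
Qed.

Lemma zz_norep t o1 o2 (F : seq bool) : 3 <= t -> 2 <= count_mem true F -> o1 < o2 ->
  occ (zz t) o1 F -> occ (zz t) o2 F -> False.
Proof.
move=> Ht HF Ho h1 h2.
have [f1 [g [f2 EF]]] := twoA HF.
have g1 : occ (W t) (size pfx + o1 + size f1) (run g).
  by apply: (occ_sub (Q := F) (q2 := f2)) => //; rewrite W_pfx; apply: occ_in.
have g2 : occ (W t) (size pfx + o2 + size f1) (run g).
  by apply: (occ_sub (Q := F) (q2 := f2)) => //; rewrite W_pfx; apply: occ_in.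
have [H _] := keyrun g1 g2 (ltac:(lia) : size pfx + o1 + size f1 < size pfx + o2 + size f1).
have SF : 2 <= size F by rewrite EF /run !size_cat /= !size_cat /=; lia.
case: h2 => Hs _; lia.
Qed.



Definition sub (s : nat -> seq bool) (L : seq nat) : seq bool := flatten (map s L).
Definition tau_of (A B C : seq nat) : pattern := map inl (A ++ A ++ B ++ B ++ C ++ C).
Definition good (A B C : seq nat) : Prop :=
  (forall x, count_mem x (A ++ B ++ C) <= 2) /\
  (forall x, x \in C -> count_mem x (A ++ B ++ C) = 2).
Definition rep (A B C : seq nat) (w : seq bool) : Prop :=
  exists s, w = sub s A ++ sub s A ++ sub s B ++ sub s B ++ sub s C ++ sub s C.

Lemma sub_cat s L1 L2 : sub s (L1 ++ L2) = sub s L1 ++ sub s L2.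
Proof. by rewrite /sub map_cat flatten_cat. Qed.

Lemma subst_inl s L : subst_apply s (map inl L) = sub s L.
Proof. by rewrite /subst_apply /sub -map_comp. Qed.

Lemma lang_tau A B C w : lang (tau_of A B C) w <-> rep A B C w.
Proof.
split=> [[s Hs]|[s Hs]]; exists s; by rewrite Hs /tau_of subst_inl !sub_cat.
Qed.

Lemma tau_pi A B C w : lang (tau_of A B C) w -> lang pi_sq w.
Proof.
case/lang_tau => s ->.
exists (fun x => if x == 0 then sub s A else if x == 1 then sub s B else sub s C).
by rewrite /subst_apply /pi_sq /= cats0.
Qed.

Lemma count_take_index (x : nat) s : count_mem x (take (index x s) s) = 0.
Proof. elim: s => //= y s IH; case: eqP => //= /eqP; rewrite eq_sym => /negbTE ->; by rewrite IH. Qed.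

Lemma split1 (x : nat) s : x \in s -> s = take (index x s) s ++ x :: drop (index x s).+1 s.
Proof. by move=> H; rewrite -{1}(cat_take_drop (index x s) s) (drop_nth x) ?index_mem // nth_index. Qed.

Lemma two_occ (x : nat) C : 2 <= count_mem x C -> exists C1 C2 C3, C = C1 ++ x :: C2 ++ x :: C3.
Proof.
move=> H.
have xC : x \in C by rewrite -has_pred1 has_count; lia.
have E := split1 xC.
have H2 : 1 <= count_mem x (drop (index x C).+1 C).
  move: H; rewrite {1}E count_cat count_take_index /= eqxx; lia.
have xD : x \in drop (index x C).+1 C by rewrite -has_pred1 has_count; lia.
have E2 := split1 xD.
exists (take (index x C) C), (take (index x (drop (index x C).+1 C)) (drop (index x C).+1 C)),
  (drop (index x (drop (index x C).+1 C)).+1 (drop (index x C).+1 C)).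
by rewrite {1}E {1}E2.
Qed.

Lemma cnt_sub s L : count_mem true (sub s L) = sumn (map (fun x => count_mem true (s x)) L).
Proof. by rewrite /sub count_flatten -map_comp. Qed.

Lemma sumn_map_add (U : seq nat) (g h : nat -> nat) :
  sumn (map (fun x => g x + h x) U) = sumn (map g U) + sumn (map h U).
Proof. elim: U => //= u U ->; lia. Qed.

Lemma sumn_map_le (U : seq nat) (g h : nat -> nat) : (forall x, g x <= h x) ->
  sumn (map g U) <= sumn (map h U).
Proof. move=> H; elim: U => //= u U IH; have := H u; lia. Qed.

Lemma sumn_pick (U : seq nat) (y : nat) (f : nat -> nat) : uniq U -> y \in U ->
  sumn (map (fun x => (y == x) * f x) U) = f y.
Proof.
elim: U => //= u U IH /andP [uU uniqU]; rewrite inE.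
case: (eqVneq y u) => [->|ne] /= H.
- rewrite mul1n.
  suff -> : sumn (map (fun x => (u == x) * f x) U) = 0 by lia.
  elim: U uU {IH uniqU H} => //= v U IH; rewrite inE negb_or => /andP [uv uU].
  by rewrite (negbTE uv) mul0n IH.
- by rewrite mul0n IH.
Qed.

Lemma sum_cnt (L U : seq nat) (f : nat -> nat) : uniq U -> {subset L <= U} ->
  sumn (map f L) = sumn (map (fun x => count_mem x L * f x) U).
Proof.
move=> uU; elim: L => [|y L IH] sLU /=.
- by elim: U {uU sLU} => //= u U <-.
- rewrite IH; last by move=> z zL; apply: sLU; rewrite inE zL orbT.
  have -> : map (fun x => count_mem x (y :: L) * f x) U =
            map (fun x => (y == x) * f x + count_mem x L * f x) U.
    by apply: eq_map => x /=; rewrite mulnDl.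
  rewrite sumn_map_add sumn_pick //; apply: sLU; exact: mem_head.
Qed.

Lemma pieces (s : nat -> seq bool) A B C : good A B C ->
  (forall x, count_mem x C = 2 -> count_mem true (s x) <= 1) ->
  count_mem true (sub s C) <= size C + count_mem true (sub s (A ++ B)).
Proof.
move=> [G1 G2] HD.
set f := fun x => count_mem true (s x).
set U := undup (A ++ B ++ C).
have uU : uniq U by exact: undup_uniq.
have sub1 : {subset C <= U} by move=> x xC; rewrite mem_undup !mem_cat xC !orbT.
have sub2 : {subset A ++ B <= U} by move=> x; rewrite mem_undup !mem_cat => /orP [->|->] //; rewrite orbT.
rewrite !cnt_sub -/f (sum_cnt f uU sub1) (sum_cnt f uU sub2).
have -> : size C = sumn (map (fun x => count_mem x C * 1) U).
  by rewrite -(sum_cnt (fun _ => 1) uU sub1); elim: (C) => //= c C' ->.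
rewrite -sumn_map_add; apply: sumn_map_le => x.
have Gx := G1 x; rewrite catA count_cat in Gx.
case: (posnP (count_mem x C)) => [->|pos]; first by lia.
have xC : x \in C by rewrite -has_pred1 has_count.
have := G2 x xC; rewrite catA count_cat => G2x.
have [E|E] : count_mem x C = 1 \/ count_mem x C = 2 by lia.
- have E' : count_mem x (A ++ B) = 1 by lia.
  rewrite E E'; lia.
- have := HD x E; rewrite E /f; lia.
Qed.

Lemma no_W A B C t : good A B C -> size C + 3 <= t -> ~ lang (tau_of A B C) (W t).
Proof.
move=> Gd Ht /lang_tau [s E].
have Ht3 : 3 <= t by lia.
have [cXY EZ] := pin Ht3 (esym E).
have HD : forall x, count_mem x C = 2 -> count_mem true (s x) <= 1.
  move=> x Hx; rewrite leqNgt; apply/negP => Hs.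
  have [C1 [C2 [C3 EC]]] := two_occ (ltac:(lia) : 2 <= count_mem x C).
  have EZ' : zz t = sub s C1 ++ s x ++ (sub s C2 ++ s x ++ sub s C3).
    by rewrite -EZ EC /sub !map_cat !flatten_cat /= !map_cat !flatten_cat.
  have o1 : occ (zz t) (size (sub s C1)) (s x) by rewrite EZ'; exact: occ_cat.
  have o2 : occ (zz t) (size (sub s C1 ++ s x ++ sub s C2)) (s x).
    by have := occ_cat (sub s C1 ++ s x ++ sub s C2) (s x) (sub s C3); rewrite -!catA -EZ'.
  have sx : 0 < size (s x) by case: (s x) Hs.
  apply: (zz_norep Ht3 Hs _ o1 o2); rewrite !size_cat; lia.
have := pieces Gd HD; rewrite EZ cnt_zz sub_cat count_cat; lia.
Qed.



Definition bnd (L : seq nat) : nat := foldr maxn 0 (map S L).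

Lemma bnd_gt x L : x \in L -> x < bnd L.
Proof.
elim: L => //= y L IH; rewrite inE => /orP [/eqP ->|/IH H]; first by rewrite leq_maxl.
by apply: (leq_trans H); rewrite leq_maxr.
Qed.

Definition sh (N : nat) (L : seq nat) : seq nat := map (addn N) L.

Lemma count_sh N x L : count_mem x (sh N L) = if N <= x then count_mem (x - N) L else 0.
Proof.
rewrite /sh count_map; case: leqP => H.
- apply: eq_count => y /=; apply/eqP/eqP; lia.
- rewrite (eq_count (a2 := pred0)) ?count_pred0 // => y /=; apply/eqP; lia.
Qed.

Lemma flat_nil (g : nat -> seq bool) L : (forall x, x \in L -> g x = [::]) -> flatten (map g L) = [::].
Proof.
elim: L => //= y L IH H; rewrite H ?mem_head //= IH // => x xL.
by apply: H; rewrite inE xL orbT.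
Qed.

Lemma combine N A1 B1 C1 A2 B2 C2 : good A1 B1 C1 -> good A2 B2 C2 ->
  (forall x, x \in A1 ++ B1 ++ C1 -> x < N) ->
  [/\ good (A1 ++ sh N A2) (B1 ++ sh N B2) (C1 ++ sh N C2),
      forall w, rep A1 B1 C1 w -> rep (A1 ++ sh N A2) (B1 ++ sh N B2) (C1 ++ sh N C2) w &
      forall w, rep A2 B2 C2 w -> rep (A1 ++ sh N A2) (B1 ++ sh N B2) (C1 ++ sh N C2) w].
Proof.
move=> [G1 G1'] [G2 G2'] lt1.
have cnt : forall x, count_mem x ((A1 ++ sh N A2) ++ (B1 ++ sh N B2) ++ (C1 ++ sh N C2)) =
    count_mem x (A1 ++ B1 ++ C1) + (if N <= x then count_mem (x - N) (A2 ++ B2 ++ C2) else 0).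
  move=> x; rewrite !count_cat !count_sh; case: leqP => _; lia.
split.
- split.
  + move=> x; rewrite cnt; case: (leqP N x) => H.
    * have H0 : count_mem x (A1 ++ B1 ++ C1) = 0.
        apply/count_memPn/negP => /lt1; lia.
      have := G2 (x - N); lia.
    * have := G1 x; lia.
  + move=> x; rewrite mem_cat cnt => /orP [xC|].
    * have xL : x \in A1 ++ B1 ++ C1 by rewrite !mem_cat xC !orbT.
      have := lt1 x xL; case: (leqP N x) => H H'; first by lia.
      have := G1' x xC; lia.
    * case/mapP => y yC2 ->.
      have H0 : count_mem (N + y) (A1 ++ B1 ++ C1) = 0.
        apply/count_memPn/negP => /lt1; lia.
      rewrite leq_addr addKn; have := G2' y yC2; lia.
- move=> w [s ->].
  exists (fun x => if x < N then s x else [::]).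
  have E1 : forall L, {subset L <= A1 ++ B1 ++ C1} -> sub (fun x => if x < N then s x else [::]) L = sub s L.
    move=> L HL; rewrite /sub; congr flatten; apply/eq_in_map => x /HL /lt1 ->; done.
  have E2 : forall L, sub (fun x => if x < N then s x else [::]) (sh N L) = [::].
    move=> L; rewrite /sub; apply: flat_nil => x /mapP [y _ ->]; rewrite ltnNge leq_addr //.
  rewrite !sub_cat !E2 !cats0 !E1 // => x xL; rewrite !mem_cat xL ?orbT //.
- move=> w [s ->].
  exists (fun x => if x < N then [::] else s (x - N)).
  have E1 : forall L, {subset L <= A1 ++ B1 ++ C1} -> sub (fun x => if x < N then [::] else s (x - N)) L = [::].
    move=> L HL; apply: flat_nil => x /HL /lt1 ->; done.
  have E2 : forall L, sub (fun x => if x < N then [::] else s (x - N)) (sh N L) = sub s L.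
    move=> L; rewrite /sub /sh -map_comp; congr flatten; apply: eq_map => y /=.
    by rewrite ltnNge leq_addr /= addKn.
  rewrite !sub_cat !E2 !E1 // => x xL; rewrite !mem_cat xL ?orbT //.
Qed.



Lemma iotaS0 n : iota 0 n.+1 = iota 0 n ++ [:: n].
Proof. by rewrite -addn1 iotaD. Qed.

Lemma rank_count (z : seq bool) (c : bool) (P : pred nat) :
  count (fun j => (nth false z j == c) && P (count_mem c (take j z))) (iota 0 (size z)) =
  count P (iota 0 (count_mem c z)).
Proof.
elim/last_ind: z => [|z d IH] //.
rewrite size_rcons iotaS0 count_cat /= -cats1 count_cat /=.
rewrite nth_cat ltnn subnn /= take_cat ltnn subnn take0 cats0 addn0.
rewrite (@eq_in_count _ _ (fun j => (nth false z j == c) && P (count_mem c (take j z)))); last first.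
  move=> j; rewrite mem_iota add0n => /andP [_ Hj] /=.
  by rewrite nth_cat Hj take_cat Hj.
rewrite IH addn0; case: (d == c) => /=.
- by rewrite addn1 iotaS0 count_cat /= addn0.
- by rewrite !addn0.
Qed.

Lemma count_half n k : count (fun r => r %/ 2 == k) (iota 0 n) = minn 2 (n - k.*2).
Proof.
elim: n => [|n IH]; first by rewrite /= minn0.
rewrite iotaS0 count_cat IH /=.
case: eqP => H /=; lia.
Qed.

Lemma arith1 n k : odd n && (k == n %/ 2) + minn 2 (n - k.*2) <= 2.
Proof.
have := modn2 n; case: (odd n) => /= M; last by lia.
case: (k =P n %/ 2) => /= H; lia.
Qed.

Lemma arith2 n k : 0 < minn 2 (n - k.*2) -> odd n && (k == n %/ 2) + minn 2 (n - k.*2) = 2.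
Proof.
have := modn2 n; case: (odd n) => /= M; case: (k =P n %/ 2) => /= H; lia.
Qed.

Section Word.
Variables u v z : seq bool.
Hypothesis cond : forall c : bool, odd (count_mem c z) -> c \in u ++ v.

Let uv := u ++ v.
Let N0 := size uv.
Definition pv (c : bool) (k : nat) : nat := N0 + k.*2 + c.
Let cz c := count_mem c z.
Definition fAB (j : nat) : nat :=
  let c := nth false uv j in
  if odd (cz c) && (j == index c uv) then pv c (cz c %/ 2) else j.
Definition wA := map fAB (iota 0 (size u)).
Definition wB := map fAB (iota (size u) (size v)).
Definition wC := [seq pv (nth false z j) (count_mem (nth false z j) (take j z) %/ 2) | j <- iota 0 (size z)].
Definition wsig (x : nat) : seq bool := if x < N0 then [:: nth false uv x] else [:: odd (x - N0)].

Lemma pv_ge c k : N0 <= pv c k.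
Proof. rewrite /pv; lia. Qed.

Lemma wsig_pv c k : wsig (pv c k) = [:: c].
Proof.
rewrite /wsig ltnNge pv_ge /= /pv (_ : N0 + k.*2 + c - N0 = k.*2 + c); last by lia.
by rewrite oddD odd_double /=; case: c.
Qed.

Lemma pv_inj c k d l : (pv c k == pv d l) = (c == d) && (k == l).
Proof.
rewrite /pv; apply/eqP/andP.
- move=> H; have Hc : c = d.
    have H' : k.*2 + c = l.*2 + d by lia.
    move: (congr1 odd H'); rewrite !oddD !odd_double /=.
    by case: c d {H H'} => [] [].
  subst d; split => //; apply/eqP; move: H; case: c => /=; lia.
- by case=> /eqP -> /eqP ->.
Qed.

Lemma flat_single (g : nat -> bool) L : flatten (map (fun j => [:: g j]) L) = map g L.
Proof. by elim: L => //= j L ->. Qed.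

Lemma wsig_fAB j : j < N0 -> wsig (fAB j) = [:: nth false uv j].
Proof.
move=> H; rewrite /fAB; case: ifP => _; first by rewrite wsig_pv.
by rewrite /wsig H.
Qed.

Lemma sub_wA : sub wsig wA = u.
Proof.
rewrite /sub /wA -map_comp.
have -> : map (wsig \o fAB) (iota 0 (size u)) = map (fun j => [:: nth false u j]) (iota 0 (size u)).
  apply/eq_in_map => j; rewrite mem_iota add0n => /andP [_ Hj] /=.
  rewrite wsig_fAB; last by rewrite /N0 /uv size_cat; lia.
  by rewrite /uv nth_cat Hj.
by rewrite flat_single -/(mkseq _ _) mkseq_nth.
Qed.

Lemma sub_wB : sub wsig wB = v.
Proof.
rewrite /sub /wB -map_comp.
have -> : map (wsig \o fAB) (iota (size u) (size v)) = map (fun j => [:: nth false v (j - size u)]) (iota (size u) (size v)).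
  apply/eq_in_map => j; rewrite mem_iota => /andP [H1 Hj] /=.
  rewrite wsig_fAB; last by rewrite /N0 /uv size_cat; lia.
  by rewrite /uv nth_cat ltnNge H1.
rewrite flat_single.
have -> : iota (size u) (size v) = map (addn (size u)) (iota 0 (size v)) by rewrite -iotaDl addn0.
rewrite -map_comp (@eq_map _ _ _ (nth false v)); first by rewrite -/(mkseq _ _) mkseq_nth.
by move=> j /=; rewrite addKn.
Qed.

Lemma sub_wC : sub wsig wC = z.
Proof.
rewrite /sub /wC -map_comp.
rewrite (@eq_map _ _ _ (fun j => [:: nth false z j])); last by move=> j /=; rewrite wsig_pv.
by rewrite flat_single -/(mkseq _ _) mkseq_nth.
Qed.

Lemma wAB : wA ++ wB = map fAB (iota 0 N0).
Proof. by rewrite /wA /wB -map_cat -iotaD /N0 /uv size_cat. Qed.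

Lemma cnt_wC c k : count_mem (pv c k) wC = minn 2 (cz c - k.*2).
Proof.
rewrite /wC count_map -count_half -rank_count.
apply: eq_in_count => j _ /=; rewrite pv_inj.
case: eqP => [->|] //=.
Qed.

Lemma cnt_wC_lt x : x < N0 -> count_mem x wC = 0.
Proof.
move=> H; apply/count_memPn/mapP => [[j _ E]].
have := pv_ge (nth false z j) (count_mem (nth false z j) (take j z) %/ 2); lia.
Qed.

Lemma cnt_fAB_lt x : x < N0 -> count_mem x (map fAB (iota 0 N0)) <= 1.
Proof.
move=> H; rewrite count_map.
apply: (@leq_trans (count (pred1 x) (iota 0 N0))).
  apply: sub_count => j /=; rewrite /fAB; case: ifP => _ //.
  move/eqP => E; have := pv_ge (nth false uv j) (cz (nth false uv j) %/ 2); lia.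
by rewrite count_uniq_mem ?iota_uniq //; case: (_ \in _).
Qed.

Lemma cnt_fAB_pv c k : count_mem (pv c k) (map fAB (iota 0 N0)) = odd (cz c) && (k == cz c %/ 2).
Proof.
rewrite count_map.
rewrite (@eq_in_count _ _ (fun j => (j == index c uv) && (odd (cz c) && (k == cz c %/ 2)))); last first.
  move=> j; rewrite mem_iota add0n => /andP [_ Hj] /=.
  rewrite /fAB; case: ifP => [/andP [Ho /eqP Ej]|Hf].
  - rewrite pv_inj; apply/andP/andP.
    + case=> /eqP Ec /eqP Ek; subst c.
      by split; [rewrite -Ej | rewrite Ho Ek eqxx].
    + case=> /eqP Ej' /andP [Ho' /eqP Ek].
      have Ec : nth false uv j = c.
        by rewrite Ej' nth_index // -index_mem -Ej'.
      by rewrite Ec Ek; split.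
  - apply/eqP/andP => [E|].
    + by have := pv_ge c k; lia.
    + case=> /eqP Ej /andP [Ho Ek].
      have Ec : nth false uv j = c by rewrite Ej nth_index // -index_mem -Ej.
      by move: Hf; rewrite Ec Ho Ej eqxx.
case: (odd (cz c) && (k == cz c %/ 2)) / andP => [[Ho _]|_].
- rewrite (eq_count (a2 := pred1 (index c uv))); last by move=> j /=; rewrite andbT.
  rewrite count_uniq_mem ?iota_uniq // mem_iota add0n /= index_mem cond //.
- by rewrite (eq_count (a2 := pred0)) ?count_pred0 // => j /=; rewrite andbF.
Qed.

Lemma word_good : good wA wB wC.
Proof.
have E : forall x, count_mem x (wA ++ wB ++ wC) = count_mem x (map fAB (iota 0 N0)) + count_mem x wC.
  by move=> x; rewrite catA wAB count_cat.
split.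
- move=> x; rewrite E; case: (ltnP x N0) => H.
  + by rewrite cnt_wC_lt // addn0 (leq_trans (cnt_fAB_lt H)).
  + have -> : x = pv (odd (x - N0)) ((x - N0)./2).
      rewrite /pv -{1}(subnKC H) -addnA; congr addn.
      by rewrite addnC -{1}(odd_double_half (x - N0)).
    by rewrite cnt_fAB_pv cnt_wC -divn2 arith1.
- move=> x xC; rewrite E.
  have [c [k Ex]] : exists c k, x = pv c k.
    by case/mapP: xC => j _ ->; eexists; eexists.
  have Hc : 0 < count_mem x wC by rewrite -has_count has_pred1.
  move: Hc; rewrite Ex cnt_fAB_pv cnt_wC => Hc.
  by rewrite arith2.
Qed.

Lemma word_rep : rep wA wB wC (u ++ u ++ v ++ v ++ z ++ z).
Proof. by exists wsig; rewrite sub_wA sub_wB sub_wC. Qed.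

End Word.



Lemma triple_of u v z : (forall c : bool, odd (count_mem c z) -> c \in u ++ v) ->
  exists A B C, good A B C /\ rep A B C (u ++ u ++ v ++ v ++ z ++ z).
Proof. move=> H; exists (wA u v z), (wB u v z), (wC u v z); split; [exact: word_good | exact: word_rep]. Qed.

Lemma all_nseq (s : seq bool) d : (forall x, x \in s -> x = d) -> s = nseq (size s) d.
Proof.
elim: s => //= x s IH H; rewrite (H x (mem_head _ _)); congr cons.
by apply: IH => y ys; apply: H; rewrite inE ys orbT.
Qed.

Lemma word_good' w : lang pi_sq w -> exists A B C, good A B C /\ rep A B C w.
Proof.
case=> s ->; rewrite /subst_apply /pi_sq /= cats0.
set u := s 0; set v := s 1; set z := s 2.
case Hc: (all (fun c => ~~ odd (count_mem c z) || (c \in u ++ v)) [:: true; false]).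
- apply: triple_of => c Ho; move/allP: Hc => /(_ c).
  by rewrite Ho /=; case: c {Ho} => /= /(_ erefl).
- move/negbT: Hc => /allPn [c _]; rewrite negb_or negbK => /andP [Ho Hn].
  have Hd : forall x, x \in u ++ v -> x = ~~ c.
    by move=> x xuv; case: (x =P c) => [E|]; [by move: Hn; rewrite -E xuv | case: x c {xuv Hn Ho} => [] []].
  have Hz : forall c' : bool, odd (count_mem c' [::]) -> c' \in nseq (size u + size v) (~~ c) ++ z by [].
  have [A [B [C [G R]]]] := triple_of Hz.
  exists A, B, C; split => //.
  have E : u ++ u ++ v ++ v = nseq (size u + size v) (~~ c) ++ nseq (size u + size v) (~~ c).
    rewrite -nseqD.
    have -> : u ++ u ++ v ++ v = nseq (size (u ++ u ++ v ++ v)) (~~ c).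
      apply: all_nseq => x; rewrite !mem_cat => H; apply: Hd; rewrite mem_cat.
      by case/orP: H => [->|/orP [->|/orP [->|->]]]; rewrite ?orbT.
    by rewrite !size_cat; congr nseq; lia.
  have -> : u ++ u ++ v ++ v ++ z ++ z = (u ++ u ++ v ++ v) ++ z ++ z by rewrite -!catA.
  by rewrite E -catA; move: R; rewrite !cats0.
Qed.



Lemma all_good (P : seq (seq bool)) : (forall w, w \in P -> lang pi_sq w) ->
  exists A B C, [/\ good A B C, A != [::] & forall w, w \in P -> rep A B C w].
Proof.
elim: P => [|w P IH] H.
- exists [:: 0], [::], [::]; split => //.
  split => // x; rewrite /= addn0; case: (_ == _) => //.
- have [A [B [C [G NA R]]]] : exists A B C, [/\ good A B C, A != [::] & forall w, w \in P -> rep A B C w].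
    by apply: IH => w' Hw; apply: H; rewrite inE Hw orbT.
  have [A2 [B2 [C2 [G2 R2]]]] := word_good' (H w (mem_head _ _)).
  have [G' R1' R2'] := combine G G2 (fun x => @bnd_gt x (A ++ B ++ C)).
  eexists; eexists; eexists; split; first exact: G'.
  + by case: (A) NA.
  + move=> w'; rewrite inE => /orP [/eqP ->|Hw']; [exact: R2' | exact: R1' (R _ Hw')].
Qed.

Lemma count_inl (x : nat) (L : seq nat) : count_mem (inl x : symbol) (map inl L) = count_mem x L.
Proof. by rewrite count_map; apply: eq_count => y /=. Qed.

Lemma W_lang t : lang pi_sq (W t).
Proof.
exists (fun x => if x == 0 then X0 else if x == 1 then Y0 else zz t).
by rewrite /subst_apply /pi_sq /W /= cats0.
Qed.

Theorem mainTheorem18 (m : nat) (hm : 4 <= m) : TD_infinite m pi_sq.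
Proof.
move=> [T [Hcons Hteach]].
set P := [seq e.1 | e <- T & e.2].
have HP : forall w, w \in P -> lang pi_sq w.
  move=> w /mapP [e]; rewrite mem_filter => /andP [He eT] ->.
  by apply/(Hcons e eT).
have [A [B [C [G NA R]]]] := all_good HP.
have Hcl : in_class m (tau_of A B C).
  split.
  - by rewrite /tau_of; case: (A) NA.
  - by rewrite /constant_free /tau_of all_map; apply/allP.
  - move=> x; rewrite /tau_of count_inl !count_cat.
    have := G.1 x; rewrite !count_cat; lia.
have Hc : consistent (tau_of A B C) T.
  move=> e eT; split.
  - by move/tau_pi/(Hcons e eT).
  - move=> He; apply/lang_tau; apply: R; apply/mapP; exists e => //.
    by rewrite mem_filter He.
have := Hteach _ Hcl Hc (W (size C + 3)).
case=> _ H; apply: (no_W G (leqnn _)); apply: H; exact: W_lang.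
Qed.
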